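(* Assume Hypotheses 1 and 2 (see context). For any $x_1=(a_1,z_1),x_2=(a_2,z_2)\in U$ and $t_0>0$, if $x_2\in\mathcal{C}(x_1)$, $\Phi([0,t_0],x_1)\subset U$ and $\Phi([0,t_0],x_2)\subset U$, then, writing $\Phi(t,x_i)=(\tilde a_i(t),\tilde z_i(t))$, we have $\|\tilde a_2(t)-\tilde a_1(t)\|\ge\|a_2-a_1\|e^{c_1t}$ for all $t\in[0,t_0]$.
   Context: System $\dot a=f(a,z)$, $\dot z=g(a,z)$, $(a,z)\in\mathbb{R}^n\times\mathbb{R}^m$, $x=(a,z)$, $X=\mathbb{R}^n\times\mathbb{R}^m$, with flow $\Phi(t,x)$; Euclidean inner product, norm, operator norm. $\mathcal{L}(x_1,x_2)=\|a_2-a_1\|^2-\|z_2-z_1\|^2$; $\mathcal{C}(x)=\{x'\in X:\mathcal{L}(x',x)\ge0\}$; $\mathbb{B}_d(x)=\{(a',z'):\|a'-a\|\le d,\|z'-z\|\le d\}$. Hypothesis 1: $U$ is open and convex, and there is $d>0$ with $\mathcal{C}(x)\cap U\subset\mathbb{B}_d(x)$ for all $x\in U$. Hypothesis 2: $f,g$ are $C^1$ on $U$; there exist a continuous positive $\alpha:U\to\mathbb{R}$, a continuous nonnegative $\ell:U\to\mathbb{R}$ and $c_1>0$ with, for all $x\in U$: $\langle a',D_af(x)a'\rangle\ge\alpha(x)\|a'\|^2$ for all $a'$; $\langle z',D_zg(x)z'\rangle\le\ell(x)\|z'\|^2$ for all $z'$; $\alpha(x)\ge\ell(x)+\|D_zf(x)\|+\|D_ag(x)\|+c_1$.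 *)

(* Defs.v *)
From mathcomp Require Import ssreflect ssrfun ssrbool eqtype ssrnat seq fintype bigop.
From Stdlib Require Import Reals ClassicalEpsilon.
Open Scope R_scope.

Definition vec (n : nat) := 'I_n -> R.

Definition vzero (n : nat) : vec n := fun _ => 0.
Definition vadd {n} (u v : vec n) : vec n := fun i => u i + v i.
Definition vsub {n} (u v : vec n) : vec n := fun i => u i - v i.
Definition vscale {n} (c : R) (v : vec n) : vec n := fun i => c * v i.

Definition dot {n} (u v : vec n) : R := \big[Rplus/0]_(i < n) (u i * v i).
Definition vnorm {n} (v : vec n) : R := sqrt (dot v v).

Definition pnorm {n m} (a : vec n) (z : vec m) : R :=
  sqrt (dot a a + dot z z).

(* Operator norm of L : R^p -> R^q: sup { ||L v|| : ||v|| <= 1 }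
   (set to 0 if the set is unbounded, which never happens for linear L) *)
Definition opnorm_set {p q} (L : vec p -> vec q) (r : R) : Prop :=
  exists v : vec p, vnorm v <= 1 /\ r = vnorm (L v).

Lemma opnorm_set_inhabited {p q} (L : vec p -> vec q) :
  exists r, opnorm_set L r.
Proof.
  exists (vnorm (L (vzero p))). exists (vzero p). split; last by [].
  rewrite /vnorm /dot /vzero.
  have -> : \big[Rplus/0]_(i < p) (0 * 0) = 0.
    apply: (big_ind (fun x => x = 0)) => //.
    - by move=> x y -> ->; rewrite Rplus_0_l.
    - by move=> i _; rewrite Rmult_0_l.
  rewrite sqrt_0; left; exact Rlt_0_1.
Qed.

Definition opnorm {p q} (L : vec p -> vec q) : R :=
  match excluded_middle_informative (bound (opnorm_set L)) with
  | left Hb => proj1_sig (completeness _ Hb (opnorm_set_inhabited L))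
  | right _ => 0
  end.

Definition linear2 {n m k} (L : vec n -> vec m -> vec k) : Prop :=
  (forall a1 z1 a2 z2, L (vadd a1 a2) (vadd z1 z2) = vadd (L a1 z1) (L a2 z2)) /\
  (forall c a z, L (vscale c a) (vscale c z) = vscale c (L a z)).

Definition frechet {n m k} (F : vec n -> vec m -> vec k) (a : vec n) (z : vec m)
  (L : vec n -> vec m -> vec k) : Prop :=
  linear2 L /\
  forall eps, 0 < eps -> exists delta, 0 < delta /\
    forall a' z', pnorm a' z' < delta ->
      vnorm (vsub (vsub (F (vadd a a') (vadd z z')) (F a z)) (L a' z'))
        <= eps * pnorm a' z'.

Definition C1_on {n m k} (U : vec n -> vec m -> Prop) (F : vec n -> vec m -> vec k)
  (DF : vec n -> vec m -> vec n -> vec m -> vec k) : Prop :=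
  (forall a z, U a z -> frechet F a z (DF a z)) /\
  (forall a z, U a z -> forall eps, 0 < eps -> exists delta, 0 < delta /\
     forall a2 z2, U a2 z2 -> pnorm (vsub a2 a) (vsub z2 z) < delta ->
       forall a' z', vnorm (vsub (DF a2 z2 a' z') (DF a z a' z')) <= eps * pnorm a' z').

Definition cont_on {n m} (U : vec n -> vec m -> Prop) (h : vec n -> vec m -> R) : Prop :=
  forall a z, U a z -> forall eps, 0 < eps -> exists delta, 0 < delta /\
    forall a2 z2, U a2 z2 -> pnorm (vsub a2 a) (vsub z2 z) < delta ->
      Rabs (h a2 z2 - h a z) < eps.

Definition open_set {n m} (U : vec n -> vec m -> Prop) : Prop :=
  forall a z, U a z -> exists r, 0 < r /\
    forall a2 z2, pnorm (vsub a2 a) (vsub z2 z) < r -> U a2 z2.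

Definition convex_set {n m} (U : vec n -> vec m -> Prop) : Prop :=
  forall a1 z1 a2 z2 lam, U a1 z1 -> U a2 z2 -> 0 <= lam <= 1 ->
    U (vadd (vscale lam a1) (vscale (1 - lam) a2))
      (vadd (vscale lam z1) (vscale (1 - lam) z2)).

Definition Lcal {n m} (a1 : vec n) (z1 : vec m) (a2 : vec n) (z2 : vec m) : R :=
  vnorm (vsub a2 a1) ^ 2 - vnorm (vsub z2 z1) ^ 2.

Definition in_cone {n m} (a : vec n) (z : vec m) (a' : vec n) (z' : vec m) : Prop :=
  Lcal a' z' a z >= 0.

Definition in_ball {n m} (d : R) (a : vec n) (z : vec m) (a' : vec n) (z' : vec m) : Prop :=
  vnorm (vsub a' a) <= d /\ vnorm (vsub z' z) <= d.

Definition Hyp1 {n m} (U : vec n -> vec m -> Prop) : Prop :=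
  open_set U /\ convex_set U /\
  exists d, 0 < d /\ forall a z, U a z ->
    forall a' z', in_cone a z a' z' -> U a' z' -> in_ball d a z a' z'.

(* Hypothesis 2 (partial derivatives D_a f(x) a' = Df(x)(a',0), etc.) *)
Definition Hyp2 {n m} (U : vec n -> vec m -> Prop)
  (f : vec n -> vec m -> vec n) (g : vec n -> vec m -> vec m)
  (Df : vec n -> vec m -> vec n -> vec m -> vec n)
  (Dg : vec n -> vec m -> vec n -> vec m -> vec m)
  (alpha ell : vec n -> vec m -> R) (c1 : R) : Prop :=
  C1_on U f Df /\ C1_on U g Dg /\
  cont_on U alpha /\ (forall a z, U a z -> 0 < alpha a z) /\
  cont_on U ell /\ (forall a z, U a z -> 0 <= ell a z) /\
  0 < c1 /\
  forall a z, U a z ->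
    (forall a' : vec n, dot a' (Df a z a' (vzero m)) >= alpha a z * vnorm a' ^ 2) /\
    (forall z' : vec m, dot z' (Dg a z (vzero n) z') <= ell a z * vnorm z' ^ 2) /\
    alpha a z >= ell a z + opnorm (fun z' => Df a z (vzero n) z')
                         + opnorm (fun a' => Dg a z a' (vzero m)) + c1.

Definition solves_on {n m} (f : vec n -> vec m -> vec n) (g : vec n -> vec m -> vec m)
  (A : R -> vec n) (Z : R -> vec m) (t0 : R) : Prop :=
  forall t, 0 <= t <= t0 ->
    (forall i, derivable_pt_lim (fun s => A s i) t (f (A t) (Z t) i)) /\
    (forall j, derivable_pt_lim (fun s => Z s j) t (g (A t) (Z t) j)).

(* Main.v *)
From HB Require Import structures.
Require Import Defs.
From mathcomp Require Import ssreflect ssrfun ssrbool eqtype ssrnat seq fintype bigop.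
From Stdlib Require Import Reals Lra Psatz FunctionalExtensionality ClassicalEpsilon Classical.
Open Scope R_scope.
HB.instance Definition _ := Monoid.isComLaw.Build R 0 Rplus (fun x y z => esym (Rplus_assoc x y z)) Rplus_comm Rplus_0_l.

Lemma sumR_scal {I} (r : seq I) (P : pred I) (c : R) (F : I -> R) :
  \big[Rplus/0]_(i <- r | P i) (c * F i) = c * \big[Rplus/0]_(i <- r | P i) F i.
Proof. rewrite (big_morph (Rmult c) (id1 := 0) (op1 := Rplus)) //; [move=> x y; ring|ring]. Qed.

Lemma sumR_le {I} (r : seq I) (P : pred I) (F G : I -> R) :
  (forall i, P i -> F i <= G i) ->
  \big[Rplus/0]_(i <- r | P i) F i <= \big[Rplus/0]_(i <- r | P i) G i.
Proof. move=> H; apply: (big_ind2 Rle) => //; [lra| move=> *; lra]. Qed.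

Lemma sumR_ge0 {I} (r : seq I) (P : pred I) (F : I -> R) :
  (forall i, P i -> 0 <= F i) -> 0 <= \big[Rplus/0]_(i <- r | P i) F i.
Proof. move=> H; apply: (big_ind (fun x => 0 <= x)) => //; [lra| move=> *; lra]. Qed.

Lemma sumR_ext {I} (r : seq I) (P : pred I) (F G : I -> R) :
  (forall i, F i = G i) ->
  \big[Rplus/0]_(i <- r | P i) F i = \big[Rplus/0]_(i <- r | P i) G i.
Proof. move=> H; apply: eq_bigr => i _; apply H. Qed.

Section Dot.
Context {k : nat}.
Implicit Types u v w : vec k.

Lemma dot_sym u v : dot u v = dot v u.
Proof. rewrite /dot; apply: sumR_ext => i; ring. Qed.
Lemma dot_add_r u v w : dot u (vadd v w) = dot u v + dot u w.
Proof. rewrite /dot /vadd -big_split; apply: sumR_ext => i /=; ring. Qed.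
Lemma dot_sub_r u v w : dot u (vsub v w) = dot u v - dot u w.
Proof.
rewrite /dot /vsub.
have -> : forall a b : R, a - b = a + (-1) * b by move=> *; ring.
rewrite -sumR_scal -big_split; apply: sumR_ext => i /=; ring. Qed.
Lemma dot_scale_r u c v : dot u (vscale c v) = c * dot u v.
Proof. rewrite /dot /vscale -sumR_scal; apply: sumR_ext => i; ring. Qed.
Lemma dot_scale_l u c v : dot (vscale c v) u = c * dot v u.
Proof. rewrite /dot /vscale -sumR_scal; apply: sumR_ext => i; ring. Qed.
Lemma dot_sub_l u v w : dot (vsub v w) u = dot v u - dot w u.
Proof. by rewrite dot_sym dot_sub_r !(dot_sym u). Qed.
Lemma dot_zero_l u : dot (vzero k) u = 0.
Proof. rewrite /dot /vzero; apply: (big_ind (fun x => x = 0)) => //; [move=> x y -> ->; ring| move=> *; ring]. Qed.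
Lemma dot_zero_r u : dot u (vzero k) = 0.
Proof. by rewrite dot_sym dot_zero_l. Qed.
Lemma dot_ge0 u : 0 <= dot u u.
Proof. apply: sumR_ge0 => i _; nra. Qed.
Lemma vnorm_ge0 u : 0 <= vnorm u.
Proof. apply sqrt_pos. Qed.
Lemma vnorm_sq u : vnorm u ^ 2 = dot u u.
Proof. rewrite /vnorm /= Rmult_1_r sqrt_sqrt //; apply dot_ge0. Qed.
Lemma vnorm_sq' u : vnorm u * vnorm u = dot u u.
Proof. rewrite /vnorm sqrt_sqrt //; apply dot_ge0. Qed.
Lemma coord_sq u i : u i * u i <= dot u u.
Proof.
rewrite /dot (bigD1 i) //=.
have : 0 <= \big[Rplus/0]_(j < k | j != i) (u j * u j) by apply: sumR_ge0 => j _; nra.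
move=> H; rewrite -{1}(Rplus_0_r (u i * u i)); apply Rplus_le_compat_l; exact H. Qed.
Lemma dot_self0 u : dot u u = 0 -> forall i, u i = 0.
Proof. move=> H i; have := coord_sq u i; have := dot_ge0 u; nra. Qed.
Lemma dot_eq0_l u v : dot u u = 0 -> dot u v = 0.
Proof.
move=> H; rewrite /dot; apply: (big_ind (fun x => x = 0)) => //; [move=> x y -> ->; ring|].
move=> i _; rewrite (@dot_self0 u H i); ring. Qed.

Lemma CS u v : Rabs (dot u v) <= vnorm u * vnorm v.
Proof.
have Hu := vnorm_ge0 u; have Hv := vnorm_ge0 v.
have Su := vnorm_sq' u; have Sv := vnorm_sq' v.
case: (Req_dec (vnorm u) 0) => [Hu0|Hu0].
  rewrite dot_eq0_l; [rewrite Rabs_R0; nra| nra].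
case: (Req_dec (vnorm v) 0) => [Hv0|Hv0].
  rewrite dot_sym dot_eq0_l; [rewrite Rabs_R0; nra| nra].
set a := vnorm v; set b := vnorm u.
have E : forall s : R, dot (vsub (vscale a u) (vscale (s * b) v)) (vsub (vscale a u) (vscale (s*b) v))
   = a*a*dot u u - 2 * s * a * b * dot u v + s * s * b * b * dot v v.
  move=> s; rewrite !dot_sub_l !dot_sub_r !dot_scale_l !dot_scale_r (dot_sym v u); ring.
have E1 := E 1; have E2 := E (-1).
have G1 := dot_ge0 (vsub (vscale a u) (vscale (1 * b) v)).
have G2 := dot_ge0 (vsub (vscale a u) (vscale (-1 * b) v)).
rewrite E1 in G1; rewrite E2 in G2.
rewrite -/a -/b in Su Sv.
have ab : 0 < a * b by rewrite /a /b; nra.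
apply Rabs_le; split.
- have : -(a*b) * (a*b) <= dot u v * (a*b) by nra.
  move=> H; nra.
- have : dot u v * (a*b) <= (a*b) * (a*b) by nra.
  move=> H; nra.
Qed.

Lemma vnorm_scale c u : vnorm (vscale c u) = Rabs c * vnorm u.
Proof.
rewrite /vnorm dot_scale_l dot_scale_r -Rmult_assoc sqrt_mult_alt; last by nra.
by have -> : c * c = Rsqr c by []; rewrite sqrt_Rsqr_abs.
Qed.

Lemma vnorm_add u v : vnorm (vadd u v) <= vnorm u + vnorm v.
Proof.
have Hu := vnorm_ge0 u; have Hv := vnorm_ge0 v; have Huv := vnorm_ge0 (vadd u v).
have S := vnorm_sq' (vadd u v).
have E : dot (vadd u v) (vadd u v) = dot u u + 2 * dot u v + dot v v.
  have -> : dot (vadd u v) (vadd u v) = dot (vadd u v) u + dot (vadd u v) v by rewrite dot_add_r.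
  rewrite !(dot_sym (vadd u v)) !dot_add_r (dot_sym v u); ring.
have C := CS u v; have := Rle_abs (dot u v).
rewrite -S -(vnorm_sq' u) -(vnorm_sq' v) in E.
set x := vnorm (vadd u v) in Huv E *; set a := vnorm u in Hu E C *; set b := vnorm v in Hv E C *.
move=> H0; have H : x * x <= (a + b) * (a + b) by nra.
apply Rsqr_incr_0_var; rewrite /Rsqr; lra.
Qed.

Lemma vsub_sym_norm u v : vnorm (vsub u v) = vnorm (vsub v u).
Proof. rewrite /vnorm; f_equal; rewrite /dot; apply: sumR_ext => i; rewrite /vsub; ring. Qed.
End Dot.

Definition ebasis {p} (i : 'I_p) : vec p := fun j => if i == j then 1 else 0.

Lemma vec_decomp {p} (v : vec p) :
  v = \big[vadd/vzero p]_(i < p) vscale (v i) (ebasis i).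
Proof.
apply: functional_extensionality => j.
rewrite (big_morph (fun w : vec p => w j) (id1 := 0) (op1 := Rplus)) //.
rewrite (bigD1 j) //= /vscale /ebasis eqxx.
rewrite big1; first ring.
move=> i /negbTE ->; ring.
Qed.

Lemma opnorm_prop {p q} (L : vec p -> vec q)
  (Hadd : forall x y, L (vadd x y) = vadd (L x) (L y))
  (Hsc : forall c x, L (vscale c x) = vscale c (L x)) :
  0 <= opnorm L /\ forall v, vnorm (L v) <= opnorm L * vnorm v.
Proof.
have L0 : L (vzero p) = vzero q.
  have -> : vzero p = vscale 0 (vzero p) by apply: functional_extensionality => i; rewrite /vscale /vzero; ring.
  rewrite Hsc; apply: functional_extensionality => i; rewrite /vscale /vzero; ring.
have Hb : bound (opnorm_set L).
  exists (\big[Rplus/0]_(i < p) vnorm (L (ebasis i))).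
  move=> r [v [Hv ->]].
  rewrite (vec_decomp v) (big_morph L (id1 := vzero q) (op1 := vadd)) //.
  apply Rle_trans with (r2 := \big[Rplus/0]_(i < p) vnorm (L (vscale (v i) (ebasis i)))).
    apply: (big_ind2 (fun (x : vec q) (y : R) => vnorm x <= y)).
    - rewrite /vnorm dot_zero_l sqrt_0; lra.
    - move=> x1 x2 y1 y2 H1 H2; have := vnorm_add x1 y1; lra.
    - move=> i _; lra.
  apply: sumR_le => i _; rewrite Hsc vnorm_scale.
  have := vnorm_ge0 (L (ebasis i)).
  have : Rabs (v i) <= 1.
    have C := coord_sq v i. have := vnorm_sq' v. have := vnorm_ge0 v.
    move=> A B; apply Rabs_le; split; nra.
  move=> *; nra.
have Hlub : is_lub (opnorm_set L) (opnorm L).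
  rewrite /opnorm; case: excluded_middle_informative => // H.
  by case: (completeness _ H (opnorm_set_inhabited L)).
case: Hlub => Hup Hleast.
have G0 : 0 <= opnorm L.
  apply: Hup; exists (vzero p); split; last by rewrite L0 /vnorm dot_zero_l sqrt_0.
  rewrite /vnorm dot_zero_l sqrt_0; lra.
split => // v.
case: (Req_dec (vnorm v) 0) => [H0|H0].
  have -> : v = vzero p.
    apply: functional_extensionality => i; apply: dot_self0; rewrite -vnorm_sq' H0; ring.
  rewrite L0 /vnorm !dot_zero_l !sqrt_0; lra.
have Hpos : 0 < vnorm v by have := vnorm_ge0 v; lra.
have Ew : v = vscale (vnorm v) (vscale (/ vnorm v) v).
  apply: functional_extensionality => i; rewrite /vscale; field; lra.
have Hw : vnorm (L (vscale (/ vnorm v) v)) <= opnorm L.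
  apply: Hup; exists (vscale (/ vnorm v) v); split => //.
  rewrite vnorm_scale Rabs_right; last by apply Rle_ge, Rlt_le, Rinv_0_lt_compat.
  rewrite Rinv_l; lra.
rewrite {1}Ew Hsc vnorm_scale Rabs_right; last lra.
nra.
Qed.

Lemma deriv_sum {I} (r : seq I) (F : I -> R -> R) (F' : I -> R) x :
  (forall i, derivable_pt_lim (F i) x (F' i)) ->
  derivable_pt_lim (fun s => \big[Rplus/0]_(i <- r) F i s) x (\big[Rplus/0]_(i <- r) F' i).
Proof.
move=> H; elim: r => [|i r IH].
  have -> : (fun s => \big[Rplus/0]_(i <- [::]) F i s) = fun _ => 0.
    by apply: functional_extensionality => s; rewrite big_nil.
  rewrite big_nil; apply derivable_pt_lim_const.
have -> : (fun s => \big[Rplus/0]_(j <- i :: r) F j s) = fun s => F i s + \big[Rplus/0]_(j <- r) F j s.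
  by apply: functional_extensionality => s; rewrite big_cons.
rewrite big_cons; apply: derivable_pt_lim_plus => //.
Qed.

Lemma deriv_shift (G : R -> R) x l :
  derivable_pt_lim (fun h => G (x + h)) 0 l -> derivable_pt_lim G x l.
Proof.
move=> H eps Heps; case: (H eps Heps) => d Hd; exists d => h h0 hd.
have := Hd h h0 hd; by rewrite Rplus_0_l Rplus_0_r.
Qed.

Lemma deriv_approx (F : R -> R) x l :
  derivable_pt_lim F x l -> forall eps, 0 < eps -> exists d, 0 < d /\
  forall h, Rabs h < d -> Rabs (F (x + h) - F x - l * h) <= eps * Rabs h.
Proof.
move=> H eps Heps; case: (H eps Heps) => d Hd; exists d; split; first by apply cond_pos.
move=> h hd; case: (Req_dec h 0) => [->|h0].
  rewrite Rplus_0_r Rabs_R0; have -> : F x - F x - l * 0 = 0 by ring.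
  rewrite Rabs_R0; lra.
have := Hd h h0 hd.
have -> : F (x + h) - F x - l * h = ((F (x + h) - F x) / h - l) * h by field.
rewrite Rabs_mult; have := Rabs_pos_lt h h0; nra.
Qed.

Lemma pnorm_ge0 {n m} (a : vec n) (z : vec m) : 0 <= pnorm a z.
Proof. apply sqrt_pos. Qed.

Lemma pnorm_scale {n m} h (u : vec n) (w : vec m) :
  pnorm (vscale h u) (vscale h w) = Rabs h * pnorm u w.
Proof.
rewrite /pnorm !dot_scale_l !dot_scale_r.
have -> : h * (h * dot u u) + h * (h * dot w w) = Rsqr h * (dot u u + dot w w) by rewrite /Rsqr; ring.
rewrite sqrt_mult_alt; last by apply Rle_0_sqr.
by rewrite sqrt_Rsqr_abs.
Qed.

Lemma frechet_dir {n m k} (F : vec n -> vec m -> vec k) a z L (c : vec k) u w :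
  frechet F a z L ->
  derivable_pt_lim (fun h => dot c (F (vadd a (vscale h u)) (vadd z (vscale h w)))) 0
     (dot c (L u w)).
Proof.
move=> [[_ Lsc] HF] eps Heps.
have Hc := vnorm_ge0 c; have Hp := pnorm_ge0 u w.
set K := vnorm c * pnorm u w + 1.
have HK : 0 < K by rewrite /K; nra.
have He' : 0 < eps / (2 * K) by apply Rdiv_lt_0_compat; lra.
case: (HF _ He') => d [Hd HFd].
have Hd' : 0 < d / (pnorm u w + 1) by apply Rdiv_lt_0_compat; lra.
exists (mkposreal _ Hd') => h h0 /= hd.
have E0 : forall (p : nat) (v x : vec p), vadd v (vscale 0 x) = v.
  by move=> p v x; apply: functional_extensionality => i; rewrite /vadd /vscale; ring.
rewrite Rplus_0_l !E0.
have Hpn : pnorm (vscale h u) (vscale h w) < d.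
  rewrite pnorm_scale.
  have Hh : 0 < Rabs h by apply Rabs_pos_lt.
  have : Rabs h * (pnorm u w + 1) < d.
    by move: hd; rewrite /Rdiv => hd; apply (Rmult_lt_reg_r (/ (pnorm u w + 1))); [apply Rinv_0_lt_compat; lra| rewrite Rmult_assoc Rinv_r; lra].
  nra.
have HR := HFd _ _ Hpn.
rewrite pnorm_scale Lsc in HR.
set Rv := vsub (vsub (F (vadd a (vscale h u)) (vadd z (vscale h w))) (F a z)) (vscale h (L u w)) in HR.
have E : (dot c (F (vadd a (vscale h u)) (vadd z (vscale h w))) - dot c (F a z)) / h - dot c (L u w)
        = dot c Rv / h.
  rewrite /Rv !dot_sub_r dot_scale_r; field; exact h0.
rewrite E /Rdiv Rabs_mult Rabs_inv.
have Hh : 0 < Rabs h by apply Rabs_pos_lt.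
have CS1 := CS c Rv.
have Hr : 0 <= vnorm Rv by apply vnorm_ge0.
apply (Rmult_lt_reg_r (Rabs h)) => //.
rewrite Rmult_assoc Rinv_l; last lra.
rewrite Rmult_1_r.
have : vnorm c * vnorm Rv <= vnorm c * (eps / (2 * K) * (Rabs h * pnorm u w)) by apply Rmult_le_compat_l.
have : vnorm c * (eps / (2 * K) * (Rabs h * pnorm u w)) = (eps * Rabs h) * (vnorm c * pnorm u w / (2 * K)).
  field; lra.
have : vnorm c * pnorm u w / (2 * K) < 1.
  apply (Rmult_lt_reg_r (2 * K)); first lra.
  rewrite /Rdiv Rmult_assoc Rinv_l; last lra. rewrite Rmult_1_r /K; nra.
move=> H1 H2 H3.
have : 0 < eps * Rabs h by nra.
nra.
Qed.

Lemma vadd00 {p} : vadd (vzero p) (vzero p) = vzero p.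
Proof. apply: functional_extensionality => i; rewrite /vadd /vzero; ring. Qed.
Lemma vscale0 {p} c : vscale c (vzero p) = vzero p.
Proof. apply: functional_extensionality => i; rewrite /vscale /vzero; ring. Qed.
Lemma vadd0r {p} (v : vec p) : vadd v (vzero p) = v.
Proof. apply: functional_extensionality => i; rewrite /vadd /vzero; ring. Qed.
Lemma vadd0l {p} (v : vec p) : vadd (vzero p) v = v.
Proof. apply: functional_extensionality => i; rewrite /vadd /vzero; ring. Qed.

Lemma lin2_split {n m k} (L : vec n -> vec m -> vec k) : linear2 L ->
  (forall a z, L a z = vadd (L a (vzero m)) (L (vzero n) z)) /\
  (0 <= opnorm (fun z => L (vzero n) z) /\
    forall z, vnorm (L (vzero n) z) <= opnorm (fun z => L (vzero n) z) * vnorm z) /\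
  (0 <= opnorm (fun a => L a (vzero m)) /\
    forall a, vnorm (L a (vzero m)) <= opnorm (fun a => L a (vzero m)) * vnorm a).
Proof.
move=> [Ha Hs]; split; [|split].
- move=> a z; by rewrite -Ha vadd0r vadd0l.
- apply: opnorm_prop => [x y|c x]; first by rewrite -Ha vadd00.
  by rewrite -Hs vscale0.
- apply: opnorm_prop => [x y|c x]; first by rewrite -Ha vadd00.
  by rewrite -Hs vscale0.
Qed.

Lemma pt_bound {n m} f g (U : vec n -> vec m -> Prop) Df Dg alpha ell c1
  (H2 : Hyp2 U f g Df Dg alpha ell c1) Xa Xz (da : vec n) (dz : vec m) :
  U Xa Xz -> vnorm dz <= vnorm da ->
  c1 * dot da da <= dot da (Df Xa Xz da dz) /\
  c1 * dot da da <= dot da (Df Xa Xz da dz) - dot dz (Dg Xa Xz da dz).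
Proof.
move: H2 => [[Hf _] [[Hg _] [_ [_ [_ [Hell [Hc1 Hh]]]]]]] HX Hyx.
have [Hpf [Hha Hlt]] := Hh _ _ HX.
have [Sf [[oZ0 oZ] [oA0 oA]]] := @lin2_split _ _ _ _ (proj1 (Hf _ _ HX)).
have [Sg [[gZ0 gZ] [gA0 gA]]] := @lin2_split _ _ _ _ (proj1 (Hg _ _ HX)).
set OZ := opnorm (fun z => Df Xa Xz (vzero n) z) in oZ0 oZ Hlt.
set OA := opnorm (fun a => Dg Xa Xz a (vzero m)) in gA0 gA Hlt.
set x := vnorm da in Hyx; set y := vnorm dz in Hyx.
have x0 : 0 <= x by apply vnorm_ge0.
have y0 : 0 <= y by apply vnorm_ge0.
have Exx : dot da da = x * x by rewrite vnorm_sq'.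
have T1 : dot da (Df Xa Xz da (vzero m)) >= alpha Xa Xz * x ^ 2 by apply Hpf.
have T2 : Rabs (dot da (Df Xa Xz (vzero n) dz)) <= x * (OZ * y).
  apply: Rle_trans (CS _ _) _; apply Rmult_le_compat_l => //; apply oZ.
have T3 : dot dz (Dg Xa Xz (vzero n) dz) <= ell Xa Xz * y ^ 2 by apply Hha.
have T4 : Rabs (dot dz (Dg Xa Xz da (vzero m))) <= y * (OA * x).
  apply: Rle_trans (CS _ _) _; apply Rmult_le_compat_l => //; apply gA.
rewrite (Sf da dz) (Sg da dz) !dot_add_r Exx.
have := Hell _ _ HX.
have := Rle_abs (dot da (Df Xa Xz (vzero n) dz)).
have := Rle_abs (- dot da (Df Xa Xz (vzero n) dz)); rewrite Rabs_Ropp.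
have := Rle_abs (dot dz (Dg Xa Xz da (vzero m))).
move=> A1 A2 A3 Hl.
have P1 : OZ * y * x <= OZ * x * x by apply Rmult_le_compat_r; [|apply Rmult_le_compat_l].
have P2 : OA * x * y <= OA * x * x by apply Rmult_le_compat_l; nra.
have P3 : ell Xa Xz * (y * y) <= ell Xa Xz * (x * x) by apply Rmult_le_compat_l; nra.
have P4 : (ell Xa Xz + OZ + OA) * (x * x) >= 0 by nra.
have P5 : alpha Xa Xz * (x * x) >= (ell Xa Xz + OZ + OA + c1) * (x * x) by nra.
simpl in T1, T3.
split; nra.
Qed.

Definition seg {p} (r : R) (P Q : vec p) : vec p := vadd (vscale r P) (vscale (1 - r) Q).

Lemma seg_shift {p} r h (P Q : vec p) : seg (r + h) P Q = vadd (seg r P Q) (vscale h (vsub P Q)).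
Proof. apply: functional_extensionality => i; rewrite /seg /vadd /vscale /vsub; ring. Qed.
Lemma seg1 {p} (P Q : vec p) : seg 1 P Q = P.
Proof. apply: functional_extensionality => i; rewrite /seg /vadd /vscale; ring. Qed.
Lemma seg0 {p} (P Q : vec p) : seg 0 P Q = Q.
Proof. apply: functional_extensionality => i; rewrite /seg /vadd /vscale; ring. Qed.

Lemma key_ineq {n m} f g (U : vec n -> vec m -> Prop) Df Dg alpha ell c1
  (H2 : Hyp2 U f g Df Dg alpha ell c1) (Hc : convex_set U) Pa Pz Qa Qz :
  U Pa Pz -> U Qa Qz -> vnorm (vsub Pz Qz) <= vnorm (vsub Pa Qa) ->
  c1 * dot (vsub Pa Qa) (vsub Pa Qa) <= dot (vsub Pa Qa) (vsub (f Pa Pz) (f Qa Qz)) /\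
  c1 * dot (vsub Pa Qa) (vsub Pa Qa) <=
     dot (vsub Pa Qa) (vsub (f Pa Pz) (f Qa Qz)) - dot (vsub Pz Qz) (vsub (g Pa Pz) (g Qa Qz)).
Proof.
move=> HP HQ Hyx.
set da := vsub Pa Qa; set dz := vsub Pz Qz.
have HU : forall r, 0 <= r <= 1 -> U (seg r Pa Qa) (seg r Pz Qz) by move=> r Hr; apply: Hc.
have [[Hf _] [[Hg _] _]] := H2.
set chi1 := fun r => dot da (f (seg r Pa Qa) (seg r Pz Qz)).
set chi2 := fun r => dot dz (g (seg r Pa Qa) (seg r Pz Qz)).
have D1 : forall r, 0 <= r <= 1 -> derivable_pt_lim chi1 r
     (dot da (Df (seg r Pa Qa) (seg r Pz Qz) da dz)).
  move=> r Hr; apply: deriv_shift.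
  have -> : (fun h => chi1 (r + h)) = fun h => dot da (f (vadd (seg r Pa Qa) (vscale h da)) (vadd (seg r Pz Qz) (vscale h dz))).
    by apply: functional_extensionality => h; rewrite /chi1 !seg_shift.
  apply: frechet_dir; exact: Hf _ _ (HU r Hr).
have D2 : forall r, 0 <= r <= 1 -> derivable_pt_lim chi2 r
     (dot dz (Dg (seg r Pa Qa) (seg r Pz Qz) da dz)).
  move=> r Hr; apply: deriv_shift.
  have -> : (fun h => chi2 (r + h)) = fun h => dot dz (g (vadd (seg r Pa Qa) (vscale h da)) (vadd (seg r Pz Qz) (vscale h dz))).
    by apply: functional_extensionality => h; rewrite /chi2 !seg_shift.
  apply: frechet_dir; exact: Hg _ _ (HU r Hr).
have E1 : chi1 1 - chi1 0 = dot da (vsub (f Pa Pz) (f Qa Qz)).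
  by rewrite /chi1 !seg1 !seg0 dot_sub_r.
have E2 : chi2 1 - chi2 0 = dot dz (vsub (g Pa Pz) (g Qa Qz)).
  by rewrite /chi2 !seg1 !seg0 dot_sub_r.
split.
- have [c [Hc1 Hc2]] := MVT_cor2 chi1 (fun r => dot da (Df (seg r Pa Qa) (seg r Pz Qz) da dz)) 0 1 Rlt_0_1 D1.
  rewrite -E1 Hc1.
  have [B _] := @pt_bound _ _ _ _ _ _ _ _ _ _ H2 _ _ da dz (HU c ltac:(lra)) Hyx.
  lra.
- have [c [Hc1 Hc2]] := MVT_cor2 (fun r => chi1 r - chi2 r)
     (fun r => dot da (Df (seg r Pa Qa) (seg r Pz Qz) da dz) - dot dz (Dg (seg r Pa Qa) (seg r Pz Qz) da dz)) 0 1 Rlt_0_1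
     (fun r Hr => derivable_pt_lim_minus _ _ _ _ _ (D1 r Hr) (D2 r Hr)).
  have : (chi1 1 - chi2 1) - (chi1 0 - chi2 0) = dot da (vsub (f Pa Pz) (f Qa Qz)) - dot dz (vsub (g Pa Pz) (g Qa Qz)) by lra.
  move=> E; rewrite -E Hc1.
  have [_ B] := @pt_bound _ _ _ _ _ _ _ _ _ _ H2 _ _ da dz (HU c ltac:(lra)) Hyx.
  lra.
Qed.

Lemma deriv_normsq {k} (X : R -> vec k) (X' : vec k) t :
  (forall i, derivable_pt_lim (fun s => X s i) t (X' i)) ->
  derivable_pt_lim (fun s => dot (X s) (X s)) t (2 * dot (X t) X').
Proof.
move=> H; rewrite /dot.
have -> : 2 * \big[Rplus/0]_(i < k) (X t i * X' i) =
   \big[Rplus/0]_(i < k) (X' i * X t i + X t i * X' i).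
  rewrite -sumR_scal; apply: sumR_ext => i; ring.
apply: (deriv_sum _ (fun i s => X s i * X s i)) => i.
exact: derivable_pt_lim_mult.
Qed.

Lemma deriv_cont (F : R -> R) x l : derivable_pt_lim F x l ->
  forall e, 0 < e -> exists d, 0 < d /\ forall h, Rabs h < d -> Rabs (F (x + h) - F x) < e.
Proof.
move=> H e He; case: (deriv_approx _ _ _ H 1 Rlt_0_1) => d0 [Hd0 Hd].
have Hl : 0 < Rabs l + 1 by have := Rabs_pos l; lra.
have He' : 0 < e / (Rabs l + 1) by apply Rdiv_lt_0_compat.
exists (Rmin d0 (e / (Rabs l + 1))); split; first by apply Rmin_glb_lt.
move=> h Hh.
have h1 : Rabs h < d0 by apply: Rlt_le_trans Hh (Rmin_l _ _).
have h2 : Rabs h < e / (Rabs l + 1) by apply: Rlt_le_trans Hh (Rmin_r _ _).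
have A := Hd h h1.
have B : Rabs h * (Rabs l + 1) < e.
  by apply (Rmult_lt_reg_r (/ (Rabs l + 1))); [apply Rinv_0_lt_compat|rewrite Rmult_assoc Rinv_r; lra].
have C := Rabs_triang (F (x + h) - F x - l * h) (l * h).
have -> : F (x + h) - F x = F (x + h) - F x - l * h + l * h by ring.
rewrite Rabs_mult in C. nra.
Qed.

Lemma deriv_pos (F : R -> R) x l : derivable_pt_lim F x l -> F x = 0 -> 0 < l ->
  exists d, 0 < d /\ forall h, 0 < h < d -> 0 < F (x + h).
Proof.
move=> H F0 Hl; have Hl2 : 0 < l / 2 by lra.
case: (deriv_approx _ _ _ H _ Hl2) => d [Hd HH]; exists d; split => // h Hh.
have : Rabs h < d by rewrite Rabs_right; lra.
move/HH; rewrite F0 (Rabs_right h); last lra.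
move=> A; have := Rle_abs (F (x + h) - 0 - l * h); have := Rle_abs (- (F (x + h) - 0 - l * h)).
rewrite Rabs_Ropp; nra.
Qed.

Lemma dexp k x : derivable_pt_lim (fun s => exp (k * s)) x (k * exp (k * x)).
Proof.
have H := derivable_pt_lim_comp (fun s => k * s) exp x k (exp (k * x)).
have E : k * exp (k * x) = exp (k * x) * k by ring.
rewrite E; apply: H; last by apply derivable_pt_lim_exp.
have -> : k = k * 1 by ring.
have -> : (fun s => k * 1 * s) = mult_real_fct k id by apply: functional_extensionality => s; rewrite /mult_real_fct /id; ring.
apply derivable_pt_lim_scal; apply derivable_pt_lim_id.
Qed.

Theorem lemma2p2 (n m : nat)
  (f : vec n -> vec m -> vec n) (g : vec n -> vec m -> vec m)
  (U : vec n -> vec m -> Prop)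
  (Df : vec n -> vec m -> vec n -> vec m -> vec n)
  (Dg : vec n -> vec m -> vec n -> vec m -> vec m)
  (alpha ell : vec n -> vec m -> R) (c1 : R)
  (H1 : Hyp1 U) (H2 : Hyp2 U f g Df Dg alpha ell c1)
  (a1 : vec n) (z1 : vec m) (a2 : vec n) (z2 : vec m) (t0 : R)
  (A1 A2 : R -> vec n) (Z1 Z2 : R -> vec m) :
  U a1 z1 -> U a2 z2 -> 0 < t0 ->
  in_cone a1 z1 a2 z2 ->
  A1 0 = a1 -> Z1 0 = z1 -> solves_on f g A1 Z1 t0 ->
  (forall t, 0 <= t <= t0 -> U (A1 t) (Z1 t)) ->
  A2 0 = a2 -> Z2 0 = z2 -> solves_on f g A2 Z2 t0 ->
  (forall t, 0 <= t <= t0 -> U (A2 t) (Z2 t)) ->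
  forall t, 0 <= t <= t0 ->
    vnorm (vsub (A2 t) (A1 t)) >= vnorm (vsub a2 a1) * exp (c1 * t).
Proof.
move=> _ _ Ht0 Hcone E1a E1z S1 U1 E2a E2z S2 U2 t Ht.
have Hconv : convex_set U by case: H1 => _ [].
have Hc1 : 0 < c1 by case: H2 => _ [_ [_ [_ [_ [_ []]]]]].
set Na := fun s => dot (vsub (A2 s) (A1 s)) (vsub (A2 s) (A1 s)).
set Nz := fun s => dot (vsub (Z2 s) (Z1 s)) (vsub (Z2 s) (Z1 s)).
set Lf := fun s => Na s - Nz s.
set la := fun s => 2 * dot (vsub (A2 s) (A1 s)) (vsub (f (A2 s) (Z2 s)) (f (A1 s) (Z1 s))).
set lz := fun s => 2 * dot (vsub (Z2 s) (Z1 s)) (vsub (g (A2 s) (Z2 s)) (g (A1 s) (Z1 s))).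
have DNa : forall s, 0 <= s <= t0 -> derivable_pt_lim Na s (la s).
  move=> s Hs; apply: (deriv_normsq (fun s => vsub (A2 s) (A1 s))) => i.
  exact: derivable_pt_lim_minus (proj1 (S2 s Hs) i) (proj1 (S1 s Hs) i).
have DNz : forall s, 0 <= s <= t0 -> derivable_pt_lim Nz s (lz s).
  move=> s Hs; apply: (deriv_normsq (fun s => vsub (Z2 s) (Z1 s))) => i.
  exact: derivable_pt_lim_minus (proj2 (S2 s Hs) i) (proj2 (S1 s Hs) i).
have DLf : forall s, 0 <= s <= t0 -> derivable_pt_lim Lf s (la s - lz s).
  by move=> s Hs; apply: derivable_pt_lim_minus; [apply DNa|apply DNz].
have Key : forall s, 0 <= s <= t0 -> Nz s <= Na s ->
   2 * c1 * Na s <= la s /\ 2 * c1 * Na s <= la s - lz s.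
  move=> s Hs Hle.
  have Hv : vnorm (vsub (Z2 s) (Z1 s)) <= vnorm (vsub (A2 s) (A1 s)) by apply sqrt_le_1_alt.
  have [K1 K2] := @key_ineq _ _ _ _ _ _ _ _ _ _ H2 Hconv _ _ _ _ (U2 s Hs) (U1 s Hs) Hv.
  rewrite /la /lz /Na; split; lra.
have G : forall T, 0 <= T <= t0 -> (forall s, 0 <= s <= T -> Nz s <= Na s) ->
     Na 0 * exp (2 * c1 * T) <= Na T.
  move=> T HT Hinv.
  case: (Req_dec T 0) => [->|HT0].
    by rewrite Rmult_0_r exp_0 Rmult_1_r; lra.
  set h := fun s => Na s * exp (- (2 * c1) * s).
  have Dh : forall s, 0 <= s <= T -> derivable_pt_lim h s
       (la s * exp (- (2 * c1) * s) + Na s * (- (2 * c1) * exp (- (2 * c1) * s))).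
    move=> s Hs; apply: derivable_pt_lim_mult; first by apply DNa; lra.
    apply dexp.
  have [c [Hc Hc']] := MVT_cor2 h _ 0 T ltac:(lra) Dh.
  have [K1 _] := Key c ltac:(lra) (Hinv c ltac:(lra)).
  have Hex := exp_pos (- (2 * c1) * c).
  have Hpos : 0 <= la c * exp (- (2 * c1) * c) + Na c * (- (2 * c1) * exp (- (2 * c1) * c)) by nra.
  have : h 0 <= h T by nra.
  rewrite /h Rmult_0_r exp_0 Rmult_1_r => HhT.
  have Hx := exp_pos (2 * c1 * T).
  have -> : Na T = Na T * exp (- (2 * c1) * T) * exp (2 * c1 * T).
    rewrite Rmult_assoc -exp_plus.
    have -> : - (2 * c1) * T + 2 * c1 * T = 0 by ring.
    rewrite exp_0; ring.
  nra.
have Na0 : Na 0 = vnorm (vsub a2 a1) ^ 2 by rewrite vnorm_sq /Na E1a E2a.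
have Init : Nz 0 <= Na 0.
  move: Hcone; rewrite /in_cone /Lcal (vsub_sym_norm a1) (vsub_sym_norm z1) !vnorm_sq.
  rewrite /Na /Nz E1a E2a E1z E2z; lra.
have Hfin : Na 0 * exp (2 * c1 * t) <= Na t -> vnorm (vsub (A2 t) (A1 t)) >= vnorm (vsub a2 a1) * exp (c1 * t).
  move=> H.
  have -> : vnorm (vsub (A2 t) (A1 t)) = sqrt (Na t) by [].
  have -> : vnorm (vsub a2 a1) * exp (c1 * t) = sqrt (Na 0 * exp (2 * c1 * t)).
    rewrite Na0 sqrt_mult_alt; last by have := vnorm_ge0 (vsub a2 a1); nra.
    have -> : sqrt (vnorm (vsub a2 a1) ^ 2) = vnorm (vsub a2 a1).
      by rewrite /= Rmult_1_r sqrt_square //; apply vnorm_ge0.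
    have -> : 2 * c1 * t = c1 * t + c1 * t by ring.
    rewrite exp_plus sqrt_square //; apply Rlt_le, exp_pos.
  apply Rle_ge, sqrt_le_1_alt, H.
case: (Req_dec (vnorm (vsub a2 a1)) 0) => [Z|NZ].
  rewrite Z Rmult_0_l; apply Rle_ge, vnorm_ge0.
have Na0p : 0 < Na 0 by rewrite Na0; have := vnorm_ge0 (vsub a2 a1); nra.
suff Inv : forall s, 0 <= s <= t0 -> Nz s <= Na s.
  apply Hfin, G => // s Hs; apply Inv; lra.
set E := fun s => 0 <= s <= t0 /\ forall r, 0 <= r <= s -> Nz r <= Na r.
have E0 : E 0.
  split; [lra|] => r Hr; have -> : r = 0 by lra. exact Init.
have Eb : bound E by exists t0 => s [Hs _]; lra.
have [T [HTub HTl]] := completeness E Eb (ex_intro _ 0 E0).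
have T0 : 0 <= T by apply HTub.
have Tt0 : T <= t0 by apply HTl => s [Hs _]; lra.
have F1 : forall r, 0 <= r < T -> Nz r <= Na r.
  move=> r Hr; case: (classic (exists s, E s /\ r < s)) => [[s [[_ Hs] Hrs]]|NE].
    apply Hs; lra.
  have : T <= r.
    apply HTl => s Es; case: (Rle_lt_dec s r) => // Hrs; exfalso; apply NE; by exists s.
  lra.
have FT : Nz T <= Na T.
  case: (Req_dec T 0) => [->|TN0]; first exact Init.
  apply Rnot_lt_le => Hlt.
  have [d [Hd Hc]] := deriv_cont _ _ _ (DLf T ltac:(lra)) (Nz T - Na T) ltac:(lra).
  set h := - Rmin (d / 2) (T / 2).
  have Hh1 : Rmin (d / 2) (T / 2) <= d / 2 by apply Rmin_l.
  have Hh2 : Rmin (d / 2) (T / 2) <= T / 2 by apply Rmin_r.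
  have Hh3 : 0 < Rmin (d / 2) (T / 2) by apply Rmin_glb_lt; lra.
  have : Rabs h < d by rewrite /h Rabs_Ropp Rabs_right; lra.
  move/Hc => A.
  have := F1 (T + h) ltac:(rewrite /h; lra).
  have := Rle_abs (Lf (T + h) - Lf T). rewrite /Lf in A *. lra.
have ET : forall r, 0 <= r <= T -> Nz r <= Na r.
  move=> r Hr; case: (Req_dec r T) => [->|Hne] //; apply F1; lra.
move=> s Hs.
case: (Req_dec T t0) => [HT|HT]; first by apply ET; lra.
exfalso.
have Ext : exists d, 0 < d /\ forall h, 0 < h < d -> Nz (T + h) <= Na (T + h).
  case: (Rle_lt_or_eq_dec _ _ FT) => [Hlt|Heq].
    have [d [Hd Hc]] := deriv_cont _ _ _ (DLf T ltac:(lra)) (Na T - Nz T) ltac:(lra).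
    exists d; split => // h Hh.
    have : Rabs h < d by rewrite Rabs_right; lra.
    move/Hc => A; have := Rle_abs (- (Lf (T + h) - Lf T)); rewrite Rabs_Ropp; rewrite /Lf in A *; lra.
  have GT := G T (conj T0 Tt0) ET.
  have Ex : 0 < exp (2 * c1 * T) := exp_pos _.
  have NaT : 0 < Na T by nra.
  have [_ K2] := Key T (conj T0 Tt0) FT.
  have [d [Hd Hp]] := deriv_pos _ _ _ (DLf T (conj T0 Tt0)) ltac:(rewrite /Lf; lra) ltac:(nra).
  exists d; split => // h Hh; have := Hp h Hh; rewrite /Lf; lra.
case: Ext => d [Hd Hd'].
set T' := T + Rmin d (t0 - T) / 2.
have Hm1 : Rmin d (t0 - T) <= d by apply Rmin_l.
have Hm2 : Rmin d (t0 - T) <= t0 - T by apply Rmin_r.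
have Hm3 : 0 < Rmin d (t0 - T) by apply Rmin_glb_lt; lra.
have : E T'.
  rewrite /E /T'; split; first lra.
  move=> r Hr; case: (Rle_lt_dec r T) => Hr'.
    apply ET; lra.
  have -> : r = T + (r - T) by ring.
  apply Hd'; lra.
move/HTub; rewrite /T'; lra.
Qed.
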